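(* Let $\epsilon>0$, $\delta\ge 0$, $\alpha\in(0,1)$, $0<\theta_0<\theta_1<1$ and $n\ge1$ be given. Observe $X\sim\mathrm{Binom}(n,\theta)$, where $\theta$ is unknown. Set $b=e^{-\epsilon}$ and $q=\frac{2\delta b}{1-b+2\delta b}$. Define $\phi^*:\mathbb{Z}\to[0,1]$ by $\phi^*_x=F_N(x-m)$, where $N\sim\mathrm{Tulap}(0,b,q)$ and $m\in\mathbb{R}$ is chosen such that $\mathbb{E}_{\theta_0}\phi^*_X=\alpha$. Then $\phi^*$ is the uniformly most powerful level-$\alpha$ test of $H_0:\theta=\theta_0$ versus $H_1:\theta=\theta_1$ among $\mathscr D^n_{\epsilon,\delta}$.
   Context: Nearest integer function: for $t\in\mathbb{R}$, $[t]$ is the integer nearest to $t$, where for $z\in\mathbb{Z}$, $[z+1/2]$ is defined to be the nearest even integer. Tulap distribution: for $m\in\mathbb{R}$, $b\in(0,1)$, $q\in[0,1)$, $N_0\sim\mathrm{Tulap}(m,b,0)$ has cdf $F_{N_0}(x)=\frac{b^{-[x-m]}}{1+b}\big(b+(x-m-[x-m]+\tfrac12)(1-b)\big)$ for $x\leq [m]$ and $F_{N_0}(x)=1-\frac{b^{[x-m]}}{1+b}\big(b+([x-m]-(x-m)+\tfrac12)(1-b)\big)$ for $x>[m]$; and $N\sim \mathrm{Tulap}(m,b,q)$ has cdf $F_N(x)=\frac{F_{N_0}(x)-q/2}{1-q}\,I\{q/2\leq F_{N_0}(x)\leq 1-q/2\}+I\{F_{N_0}(x)>1-q/2\}$. A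 (randomized) test is a function $\phi:\{0,1,\dots,n\}\to[0,1]$, $\phi_x$ being the probability of rejecting $H_0$ when $X=x$; its power at $\theta$ is $\mathbb{E}_\theta\phi_X$. For $\epsilon>0,\delta\ge 0$, $\mathscr D^n_{\epsilon,\delta}$ is the set of tests $\phi$ such that for all $x\in\{0,\dots,n-1\}$: $\phi_x\le e^\epsilon\phi_{x+1}+\delta$, $\phi_{x+1}\le e^\epsilon\phi_x+\delta$, $1-\phi_x\le e^\epsilon(1-\phi_{x+1})+\delta$, $1-\phi_{x+1}\le e^\epsilon(1-\phi_x)+\delta$. A test $\phi^*\in\Phi$ is uniformly most powerful (UMP) at level $\alpha$ among $\Phi$ if $\sup_{\theta\in\Theta_0}\mathbb{E}_\theta\phi^*\le\alpha$ and for every $\phi\in\Phi$ with $\sup_{\theta\in\Theta_0}\mathbb{E}_\theta\phi\le\alpha$, $\mathbb{E}_\theta\phi^*\ge\mathbb{E}_\theta\phi$ for all $\theta$ in the alternative. *)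

(* Defs.v *)
From Stdlib Require Import Reals Lra ZArith.
Open Scope R_scope.

(* floor is Int_part (= up t - 1). Nearest integer, ties to the even integer. *)
Definition nearest (t : R) : Z :=
  let k := Int_part t in
  let d := t - IZR k in
  if Rlt_dec d (1/2) then k
  else if Rlt_dec (1/2) d then (k + 1)%Z
  else if Z.even k then k else (k + 1)%Z.

Definition tulap0_cdf (m b x : R) : R :=
  if Rle_dec x (IZR (nearest m)) then
    let r := IZR (nearest (x - m)) in
    Rpower b (- r) / (1 + b) * (b + (x - m - r + 1/2) * (1 - b))
  else
    let r := IZR (nearest (x - m)) in
    1 - Rpower b r / (1 + b) * (b + (r - (x - m) + 1/2) * (1 - b)).

Definition tulap_cdf (m b q x : R) : R :=
  let F0 := tulap0_cdf m b x in
  (if Rle_dec (q/2) F0 then if Rle_dec F0 (1 - q/2) then (F0 - q/2) / (1 - q) else 0 else 0)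
  + (if Rlt_dec (1 - q/2) F0 then 1 else 0).

Definition binom_pmf (n : nat) (theta : R) (x : nat) : R :=
  C n x * theta ^ x * (1 - theta) ^ (n - x).

Definition power (n : nat) (theta : R) (phi : nat -> R) : R :=
  sum_f_R0 (fun x => phi x * binom_pmf n theta x) n.

Definition is_test (n : nat) (phi : nat -> R) : Prop :=
  forall x, (x <= n)%nat -> 0 <= phi x <= 1.

Definition DP_tests (n : nat) (eps delta : R) (phi : nat -> R) : Prop :=
  is_test n phi /\
  forall x, (x < n)%nat ->
    phi x <= exp eps * phi (S x) + delta /\
    phi (S x) <= exp eps * phi x + delta /\
    1 - phi x <= exp eps * (1 - phi (S x)) + delta /\
    1 - phi (S x) <= exp eps * (1 - phi x) + delta.

Definition UMP_simple (n : nat) (Phi : (nat -> R) -> Prop) (alpha theta0 theta1 : R)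
  (phistar : nat -> R) : Prop :=
  Phi phistar /\ power n theta0 phistar <= alpha /\
  forall phi, Phi phi -> power n theta0 phi <= alpha ->
    power n theta1 phi <= power n theta1 phistar.

(* Main.v *)
Require Import Defs.
From Stdlib Require Import Reals Lra Lia ZArith Arith.
Open Scope R_scope.

Lemma nearest_spec t : IZR (nearest t) - 1/2 <= t <= IZR (nearest t) + 1/2.
Proof.
  unfold nearest. pose proof (base_Int_part t) as [H1 H2].
  destruct (Rlt_dec _ _); [lra|].
  destruct (Rlt_dec _ _); [rewrite plus_IZR; lra|].
  destruct (Z.even _); [lra| rewrite plus_IZR; lra].
Qed.

Lemma int_close k j : IZR k - IZR j <= 1 -> IZR j - IZR k <= 1 ->
  k = j \/ k = (j+1)%Z \/ j = (k+1)%Z.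
Proof.
  intros H1 H2. rewrite <- minus_IZR in H1, H2.
  apply le_IZR in H1. apply le_IZR in H2. lia.
Qed.

Definition A (b t r : R) := Rpower b (- r) / (1 + b) * (b + (t - r + 1/2) * (1 - b)).

Lemma Rpower_m1 b r : 0 < b -> Rpower b (-(r+1)) = Rpower b (-r) / b.
Proof.
  intros Hb. replace (-(r+1)) with (-r + - (1)) by ring.
  rewrite Rpower_plus, (Rpower_Ropp b 1), Rpower_1 by lra. reflexivity.
Qed.

Lemma A_shift b t r : 0 < b -> A b (t+1) (r+1) = A b t r / b.
Proof.
  intros Hb. unfold A. rewrite Rpower_m1 by lra. field. lra.
Qed.

Lemma A_shiftm b s r : 0 < b -> A b (s-1) (r-1) = b * A b s r.
Proof.
  intros Hb. replace (A b s r) with (A b ((s-1)+1) ((r-1)+1)) by (f_equal; ring).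
  rewrite A_shift by lra. field. lra.
Qed.

Lemma P_any b t k : 0 < b -> IZR k - 1/2 <= t <= IZR k + 1/2 ->
  A b t (IZR (nearest t)) = A b t (IZR k).
Proof.
  intros Hb Hk. pose proof (nearest_spec t) as Hn.
  destruct (int_close (nearest t) k) as [E|[E|E]]; try lra.
  - rewrite E; reflexivity.
  - rewrite E, plus_IZR in *.
    assert (t = IZR k + 1/2) by lra. subst t.
    unfold A. rewrite Rpower_m1 by lra. field. lra.
  - rewrite E, plus_IZR in *.
    set (r := IZR (nearest t)) in *.
    assert (t = r + 1/2) by lra. rewrite H.
    unfold A. rewrite Rpower_m1 by lra. field. lra.
Qed.

Lemma nearest0 : IZR (nearest 0) = 0.
Proof.
  pose proof (nearest_spec 0) as H.
  destruct (int_close (nearest 0) 0) as [E|[E|E]]; simpl in *; try lra.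
  - rewrite E; reflexivity.
  - rewrite E in H; simpl in H; lra.
  - assert (nearest 0 = -1)%Z by lia. rewrite H0 in H; simpl in H; lra.
Qed.

Lemma F0_neg b t k : 0 < b -> t <= 0 -> IZR k - 1/2 <= t <= IZR k + 1/2 ->
  tulap0_cdf 0 b t = A b t (IZR k).
Proof.
  intros Hb Ht Hk. unfold tulap0_cdf. rewrite nearest0.
  destruct (Rle_dec t 0); [|lra].
  rewrite Rminus_0_r. rewrite <- (P_any b t k) by lra. reflexivity.
Qed.

Lemma F0_pos b t k : 0 < b -> 0 < t -> IZR k - 1/2 <= -t <= IZR k + 1/2 ->
  tulap0_cdf 0 b t = 1 - A b (-t) (IZR k).
Proof.
  intros Hb Ht Hk. unfold tulap0_cdf. rewrite nearest0.
  destruct (Rle_dec t 0); [lra|].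
  rewrite Rminus_0_r.
  pose proof (nearest_spec t) as Hn.
  rewrite <- (P_any b (-t) k) by lra.
  assert (Hk2 : IZR (- nearest t) - 1/2 <= -t <= IZR (- nearest t) + 1/2)
    by (rewrite opp_IZR; lra).
  rewrite (P_any b (-t) (- nearest t) Hb Hk2).
  unfold A. rewrite opp_IZR, Ropp_involutive. f_equal. f_equal. f_equal. ring.
Qed.

Lemma Rpower_le1 b s : 0 < b < 1 -> 0 <= s -> Rpower b s <= 1.
Proof.
  intros Hb Hs. unfold Rpower.
  assert (ln b < 0) by (rewrite <- ln_1; apply ln_increasing; lra).
  rewrite <- exp_0. destruct (Req_dec s 0) as [->|Hs0].
  - rewrite Rmult_0_l; lra.
  - left. apply exp_increasing. nra.
Qed.

Lemma Rpower_leb b s : 0 < b < 1 -> 1 <= s -> Rpower b s <= b.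
Proof.
  intros Hb Hs. replace s with ((s - 1) + 1) by ring.
  rewrite Rpower_plus, Rpower_1 by lra.
  pose proof (Rpower_le1 b (s-1) Hb ltac:(lra)).
  assert (0 < Rpower b (s-1)) by (unfold Rpower; apply exp_pos). nra.
Qed.

Lemma A_bounds b t r : 0 < b < 1 -> r - 1/2 <= t <= r + 1/2 ->
  b * Rpower b (-r) / (1+b) <= A b t r <= Rpower b (-r) / (1+b).
Proof.
  intros Hb Ht. unfold A.
  assert (0 < Rpower b (-r)) by (unfold Rpower; apply exp_pos).
  set (P := Rpower b (-r)) in *.
  assert (0 < P / (1+b)) by (apply Rdiv_lt_0_compat; lra).
  split.
  - replace (b * P / (1+b)) with (P/(1+b) * b) by (field; lra).
    apply Rmult_le_compat_l; nra.
  - rewrite <- (Rmult_1_r (P/(1+b))) at 2. apply Rmult_le_compat_l; nra.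
Qed.

Lemma F0_rel b t : 0 < b < 1 ->
  (0 <= tulap0_cdf 0 b t <= b/(1+b) /\ tulap0_cdf 0 b (t+1) = tulap0_cdf 0 b t / b) \/
  (b/(1+b) <= tulap0_cdf 0 b t <= 1 /\ tulap0_cdf 0 b (t+1) = 1 - b * (1 - tulap0_cdf 0 b t)).
Proof.
  intros Hb.
  assert (Hbb : 0 < 1 + b) by lra.
  destruct (Rle_dec t (-1)) as [Ha|Ha].
  -
    left. pose proof (nearest_spec t) as Hn. set (k := nearest t) in *.
    assert (Hk : (k <= -1)%Z).
    { assert (IZR k < IZR 0) by (simpl; lra). apply lt_IZR in H. lia. }
    apply IZR_le in Hk.
    rewrite (F0_neg b t k) by lra.
    rewrite (F0_neg b (t+1) (k+1)) by (rewrite ?plus_IZR; lra).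
    rewrite plus_IZR. rewrite A_shift by lra.
    pose proof (A_bounds b t (IZR k) Hb ltac:(lra)).
    pose proof (Rpower_leb b (- IZR k) Hb ltac:(simpl in Hk; lra)).
    split; [|reflexivity]. split.
    + assert (0 < Rpower b (- IZR k)) by (unfold Rpower; apply exp_pos).
      assert (0 <= b * Rpower b (- IZR k) / (1 + b)).
      { apply Rmult_le_pos; [nra| left; apply Rinv_0_lt_compat; lra]. }
      lra.
    + apply Rle_trans with (Rpower b (- IZR k) / (1+b)); [lra|].
      unfold Rdiv. apply Rmult_le_compat_r; [left; apply Rinv_0_lt_compat; lra| lra].
  - destruct (Rle_dec t (-1/2)) as [Hb2|Hb2].
    + left.
      rewrite (F0_neg b t (-1)) by (simpl; lra).
      rewrite (F0_pos b (t+1) 0) by (simpl; lra).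
      unfold A. simpl IZR.
      replace (- (-1)) with 1 by ring. rewrite Ropp_0, Rpower_O, Rpower_1 by lra.
      split; [|field; lra].
      split.
      * apply Rmult_le_pos; [apply Rmult_le_pos; [lra| left; apply Rinv_0_lt_compat; lra]| nra].
      * replace (b / (1+b)) with (b/(1+b) * 1) at 2 by ring.
        apply Rmult_le_compat_l; [apply Rmult_le_pos; [lra| left; apply Rinv_0_lt_compat; lra]| nra].
    + right. destruct (Rle_dec t 0) as [Hc|Hc].
      * rewrite (F0_neg b t 0) by (simpl; lra).
        rewrite (F0_pos b (t+1) (-1)) by (simpl; lra).
        unfold A. simpl IZR.
        replace (- (-1)) with 1 by ring. rewrite Ropp_0, Rpower_O, Rpower_1 by lra.
        split; [|field; lra].
        split.
        -- replace (b / (1+b)) with (1/(1+b) * b) by (field; lra).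
           apply Rmult_le_compat_l; [left; apply Rdiv_lt_0_compat; lra| nra].
        -- apply Rle_trans with (1/(1+b) * 1).
           ++ apply Rmult_le_compat_l; [left; apply Rdiv_lt_0_compat; lra| nra].
           ++ rewrite Rmult_1_r. unfold Rdiv. rewrite Rmult_1_l. rewrite <- Rinv_1. apply Rinv_le_contravar; lra.
      * pose proof (nearest_spec (-t)) as Hn. set (k := nearest (-t)) in *.
        assert (Hk : (k <= 0)%Z).
        { assert (IZR k < IZR 1) by (simpl; lra). apply lt_IZR in H. lia. }
        apply IZR_le in Hk. simpl in Hk.
        rewrite (F0_pos b t k) by lra.
        rewrite (F0_pos b (t+1) (k-1)) by (rewrite ?minus_IZR; simpl; lra).
        rewrite minus_IZR. replace (- (t+1)) with (-t - 1) by ring.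
        rewrite A_shiftm by lra.
        pose proof (A_bounds b (-t) (IZR k) Hb ltac:(lra)).
        pose proof (Rpower_le1 b (- IZR k) Hb ltac:(lra)).
        assert (0 < Rpower b (- IZR k)) by (unfold Rpower; apply exp_pos).
        split; [|ring].
        assert (Rpower b (- IZR k) / (1 + b) <= 1/(1+b)).
        { unfold Rdiv. apply Rmult_le_compat_r; [left; apply Rinv_0_lt_compat; lra| lra]. }
        assert (0 <= b * Rpower b (- IZR k) / (1 + b)).
        { apply Rmult_le_pos; [nra| left; apply Rinv_0_lt_compat; lra]. }
        assert (1 - 1/(1+b) = b/(1+b)) by (field; lra).
        lra.
Qed.

Definition hq (q F : R) :=
  (if Rle_dec (q/2) F then if Rle_dec F (1 - q/2) then (F - q/2) / (1 - q) else 0 else 0)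
  + (if Rlt_dec (1 - q/2) F then 1 else 0).

Lemma tulap_hq b q t : tulap_cdf 0 b q t = hq q (tulap0_cdf 0 b t).
Proof. reflexivity. Qed.

Ltac dd := repeat match goal with
  | |- context [Rle_dec ?a ?b] => destruct (Rle_dec a b)
  | |- context [Rlt_dec ?a ?b] => destruct (Rlt_dec a b)
  end.

Section H.
Variable q : R.
Hypothesis Hq : 0 <= q < 1.

Lemma hq01 F : 0 <= hq q F <= 1.
Proof.
  unfold hq. dd; rewrite ?Rplus_0_r, ?Rplus_0_l;
  try lra.
  split.
  - apply Rmult_le_pos; [lra| left; apply Rinv_0_lt_compat; lra].
  - apply Rmult_le_reg_r with (1-q); [lra|]. unfold Rdiv.
    rewrite Rmult_assoc, Rinv_l by lra. lra.
Qed.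

Lemma hq_le F : hq q F = 0 \/ hq q F <= (F - q/2) / (1 - q).
Proof.
  unfold hq. dd; rewrite ?Rplus_0_r, ?Rplus_0_l;
  try lra.
  right. apply Rmult_le_reg_r with (1-q); [lra|]. unfold Rdiv.
  rewrite Rmult_assoc, Rinv_l by lra. lra.
Qed.

Lemma hq_ge F : hq q F = 1 \/ (F - q/2) / (1 - q) <= hq q F.
Proof.
  unfold hq. dd; rewrite ?Rplus_0_r, ?Rplus_0_l;
  try lra.
  - right. apply Rmult_le_reg_r with (1-q); [lra|]. unfold Rdiv.
    rewrite Rmult_assoc, Rinv_l by lra. lra.
Qed.

Lemma hq_mono F F' : F <= F' -> hq q F <= hq q F'.
Proof.
  intros HF. unfold hq.
  assert (0 < / (1-q)) by (apply Rinv_0_lt_compat; lra).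
  assert (Hm : forall a c, a <= c -> (a - q/2)/(1-q) <= (c - q/2)/(1-q)).
  { intros a c Hac. unfold Rdiv. apply Rmult_le_compat_r; lra. }
  assert (H0 : forall a, q/2 <= a -> 0 <= (a - q/2)/(1-q)).
  { intros a Ha. unfold Rdiv. apply Rmult_le_pos; lra. }
  assert (H1 : forall a, a <= 1 - q/2 -> (a - q/2)/(1-q) <= 1).
  { intros a Ha. apply Rmult_le_reg_r with (1-q); [lra|]. unfold Rdiv.
    rewrite Rmult_assoc, Rinv_l by lra. lra. }
  destruct (Rle_dec (q/2) F); destruct (Rle_dec F (1-q/2)); destruct (Rlt_dec (1-q/2) F);
  destruct (Rle_dec (q/2) F'); destruct (Rle_dec F' (1-q/2)); destruct (Rlt_dec (1-q/2) F');
  try lra; 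
  repeat match goal with
  | |- context [?a + 0] => rewrite Rplus_0_r
  | |- context [0 + ?a] => rewrite Rplus_0_l
  end;
  try (apply Hm; lra); try (apply H0; lra); try (apply H1; lra).
Qed.

End H.

Lemma G_props b delta t : 0 < b < 1 -> 0 <= delta ->
  let q := 2 * delta * b / (1 - b + 2 * delta * b) in
  let u := tulap_cdf 0 b q t in
  let v := tulap_cdf 0 b q (t + 1) in
  0 <= u <= 1 /\ u <= v /\ v <= u / b + delta /\ v <= 1 - b * (1 - u - delta) /\
  (0 < u -> v = 1 \/ u / b + delta <= v \/ 1 - b * (1 - u - delta) <= v).
Proof.
  intros Hb Hd q u v.
  assert (HD : 0 < 1 - b + 2 * delta * b) by nra.
  assert (Hq : 0 <= q < 1).
  { unfold q. split.
    - apply Rmult_le_pos; [nra| left; apply Rinv_0_lt_compat; lra].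
    - apply Rmult_lt_reg_r with (1 - b + 2 * delta * b); [lra|]. unfold Rdiv.
      rewrite Rmult_assoc, Rinv_l by lra. lra. }
  assert (H1q : 0 < 1 - q) by lra.
  set (z := fun F => (F - q/2) / (1 - q)).
  assert (Z1 : forall F, (F/b - q/2)/(1-q) = z F / b + delta).
  { intros F. unfold z, q. field. repeat split; try lra. }
  assert (Z2 : forall F, ((1 - b*(1-F)) - q/2)/(1-q) = 1 - b * (1 - z F - delta)).
  { intros F. unfold z, q. field. repeat split; try lra. }
  unfold u, v. rewrite !tulap_hq.
  set (F := tulap0_cdf 0 b t). set (F' := tulap0_cdf 0 b (t+1)).
  assert (HF : 0 <= F <= 1 /\ F' <= F/b /\ F' <= 1 - b*(1-F) /\ F <= F' /\
     (F' = F/b \/ F' = 1 - b*(1-F))).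
  { assert (E1 : b / (1+b) <= F -> 1 - b*(1-F) <= F/b).
    { intro HH. apply Rmult_le_reg_r with b; [lra|]. unfold Rdiv.
      rewrite Rmult_assoc, Rinv_l by lra.
      apply Rmult_le_compat_r with (r := 1+b) in HH; [|lra].
      unfold Rdiv in HH. rewrite Rmult_assoc, Rinv_l in HH by lra. nra. }
    assert (E2 : F <= b / (1+b) -> F/b <= 1 - b*(1-F)).
    { intro HH. apply Rmult_le_reg_r with b; [lra|]. unfold Rdiv.
      rewrite Rmult_assoc, Rinv_l by lra.
      apply Rmult_le_compat_r with (r := 1+b) in HH; [|lra].
      unfold Rdiv in HH. rewrite Rmult_assoc, Rinv_l in HH by lra. nra. }
    assert (E3 : 0 <= F -> F <= F/b).
    { intro HH. apply Rmult_le_reg_r with b; [lra|]. unfold Rdiv.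
      rewrite Rmult_assoc, Rinv_l by lra. nra. }
    destruct (F0_rel b t Hb) as [[Hr Hr2]|[Hr Hr2]]; fold F F' in Hr, Hr2.
    - assert (b/(1+b) <= 1).
      { apply Rmult_le_reg_r with (1+b); [lra|]. unfold Rdiv.
        rewrite Rmult_assoc, Rinv_l by lra. lra. }
      rewrite Hr2. pose proof (E2 ltac:(lra)). pose proof (E3 ltac:(lra)).
      repeat split; lra.
    - assert (0 <= b/(1+b)) by (apply Rmult_le_pos; [lra| left; apply Rinv_0_lt_compat; lra]).
      rewrite Hr2. pose proof (E1 ltac:(lra)).
      assert (F <= 1 - b * (1 - F)) by nra.
      repeat split; lra. }
  destruct HF as [HF0 [HF1 [HF2 [HF3 HF4]]]].
  pose proof (hq01 q Hq F). pose proof (hq01 q Hq F').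
  assert (Hb1 : 1 <= 1/b).
  { unfold Rdiv. rewrite Rmult_1_l. rewrite <- Rinv_1. apply Rinv_le_contravar; lra. }
  assert (Hdiv : forall x y, x <= y -> x / b <= y / b).
  { intros x y Hxy. unfold Rdiv. apply Rmult_le_compat_r; [left; apply Rinv_0_lt_compat; lra|lra]. }
  assert (Hdiv0 : forall x, 0 <= x -> 0 <= x / b).
  { intros x Hx. unfold Rdiv. apply Rmult_le_pos; [lra| left; apply Rinv_0_lt_compat; lra]. }
  split; [lra|]. split; [apply hq_mono; lra|].
  split; [|split].
  - apply Rle_trans with (hq q (F/b)); [apply hq_mono; lra|].
    destruct (hq_le q Hq (F/b)) as [E|E]; [rewrite E; pose proof (Hdiv0 _ (proj1 H)); lra|].
    rewrite Z1 in E.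
    destruct (hq_ge q Hq F) as [E'|E'].
    + rewrite E'. pose proof (hq01 q Hq (F/b)). assert (1 <= 1/b) by exact Hb1. unfold Rdiv in *. rewrite Rmult_1_l in *. lra.
    + fold (z F) in E'. pose proof (Hdiv _ _ E'). lra.
  - apply Rle_trans with (hq q (1 - b*(1-F))); [apply hq_mono; lra|].
    destruct (hq_le q Hq (1 - b*(1-F))) as [E|E]; [rewrite E; nra|].
    rewrite Z2 in E.
    destruct (hq_ge q Hq F) as [E'|E'].
    + rewrite E'. pose proof (hq01 q Hq (1 - b*(1-F))). nra.
    + fold (z F) in E'. nra.
  - intros Hu.
    destruct (hq_le q Hq F) as [E|E]; [lra|]. fold (z F) in E.
    destruct (hq_ge q Hq F') as [E'|E']; [left; exact E'|right].
    destruct HF4 as [HF4|HF4].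
    + left. assert (E2 : (F' - q/2)/(1-q) = z F / b + delta) by (rewrite HF4; apply Z1).
      pose proof (Hdiv _ _ E). lra.
    + right. assert (E2 : (F' - q/2)/(1-q) = 1 - b * (1 - z F - delta)) by (rewrite HF4; apply Z2).
      nra.
Qed.

Lemma C_pos n k : 0 < C n k.
Proof.
  unfold C. apply Rdiv_lt_0_compat; [apply INR_fact_lt_0|].
  apply Rmult_lt_0_compat; apply INR_fact_lt_0.
Qed.

Lemma pmf_pos n th x : 0 < th < 1 -> 0 < binom_pmf n th x.
Proof.
  intros H. unfold binom_pmf. pose proof (C_pos n x).
  apply Rmult_lt_0_compat; [apply Rmult_lt_0_compat; [lra| apply pow_lt; lra]| apply pow_lt; lra].
Qed.

Lemma LR n t0 t1 x y : 0 < t0 -> t0 <= t1 -> t1 < 1 -> (x <= y)%nat -> (y <= n)%nat ->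
  binom_pmf n t1 x * binom_pmf n t0 y <= binom_pmf n t1 y * binom_pmf n t0 x.
Proof.
  intros H0 H01 H1 Hxy Hyn. unfold binom_pmf.
  destruct (Nat.le_exists_sub x y Hxy) as [d [Hd _]]. subst y.
  replace (n - x)%nat with ((n - (d + x)) + d)%nat by lia.
  set (m := (n - (d + x))%nat).
  rewrite !pow_add.
  set (K := C n x * C n (d + x) * t1 ^ x * t0 ^ x * (1 - t1) ^ m * (1 - t0) ^ m).
  assert (HK : 0 <= K).
  { unfold K. pose proof (C_pos n x). pose proof (C_pos n (d+x)).
    assert (0 <= t1 ^ x) by (apply pow_le; lra).
    assert (0 <= t0 ^ x) by (apply pow_le; lra).
    assert (0 <= (1-t1) ^ m) by (apply pow_le; lra).
    assert (0 <= (1-t0) ^ m) by (apply pow_le; lra).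
    apply Rmult_le_pos; [|lra]. apply Rmult_le_pos; [|lra].
    apply Rmult_le_pos; [|lra]. apply Rmult_le_pos; [|lra].
    apply Rmult_le_pos; lra. }
  transitivity (K * (t0 * (1 - t1)) ^ d).
  { right. rewrite Rpow_mult_distr. unfold K. ring. }
  transitivity (K * (t1 * (1 - t0)) ^ d).
  { apply Rmult_le_compat_l; [exact HK|]. apply pow_incr. split; nra. }
  right. rewrite Rpow_mult_distr. unfold K. ring.
Qed.

Lemma sum_scal (f : nat -> R) c N : sum_f_R0 (fun i => c * f i) N = c * sum_f_R0 f N.
Proof.
  induction N; simpl; [reflexivity|]. rewrite IHN. ring.
Qed.

Theorem theorem4 (eps delta alpha theta0 theta1 : R) (n : nat) (m : R) :
  0 < eps -> 0 <= delta -> 0 < alpha < 1 ->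
  0 < theta0 -> theta0 < theta1 -> theta1 < 1 -> (1 <= n)%nat ->
  let b := exp (- eps) in
  let q := 2 * delta * b / (1 - b + 2 * delta * b) in
  let phistar := fun x : nat => tulap_cdf 0 b q (INR x - m) in
  power n theta0 phistar = alpha ->
  UMP_simple n (DP_tests n eps delta) alpha theta0 theta1 phistar.
Proof.
  intros Heps Hd Ha Ht0 Ht01 Ht1 Hn b q psi Hpow.
  assert (Hb : 0 < b < 1).
  { split; [apply exp_pos|]. rewrite <- exp_0. apply exp_increasing. lra. }
  set (e := exp eps).
  assert (Heb : e * b = 1).
  { unfold e, b. rewrite exp_Ropp. field. apply Rgt_not_eq, exp_pos. }
  assert (He1 : 1 <= e).
  { unfold e. rewrite <- exp_0. left. apply exp_increasing. lra. }
  assert (Hdivb : forall x, x / b = e * x).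
  { intros x. unfold Rdiv. replace (/ b) with e. ring.
    apply (Rmult_eq_reg_r b); [|lra]. rewrite Rinv_l by lra. exact Heb. }
  assert (Hpsi : forall x, 0 <= psi x <= 1 /\ psi x <= psi (S x) /\
     psi (S x) <= e * psi x + delta /\ psi (S x) <= 1 - b * (1 - psi x - delta) /\
     (0 < psi x -> psi (S x) = 1 \/ e * psi x + delta <= psi (S x) \/
                   1 - b * (1 - psi x - delta) <= psi (S x))).
  { intros x. rewrite <- Hdivb.
    replace (psi (S x)) with (tulap_cdf 0 b q ((INR x - m) + 1))
      by (unfold psi; rewrite S_INR; f_equal; ring).
    apply (G_props b delta (INR x - m) Hb Hd). }
  assert (HDP : DP_tests n eps delta psi).
  { split.
    - intros x _. apply Hpsi.
    - intros x _. fold e.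
      destruct (Hpsi x) as [[P0 P1] [P2 [P3 [P4 _]]]].
      assert (e * (b * (1 - psi x - delta)) <= e * (1 - psi (S x)))
        by (apply Rmult_le_compat_l; lra).
      replace (e * (b * (1 - psi x - delta))) with (1 - psi x - delta) in H
        by (rewrite <- Rmult_assoc, Heb; ring).
      split; [nra|]. split; [lra|]. split; [lra|]. nra. }
  split; [exact HDP|]. split; [lra|].
  intros phi [Hphi Hdp] Hphi0.
  assert (Hstep : forall x, (x < n)%nat -> phi x <= psi x -> 0 < psi x ->
            phi (S x) <= psi (S x)).
  { intros x Hx Hle Hpos.
    destruct (Hdp x Hx) as [D1 [D2 [D3 D4]]]. fold e in D1, D2, D3, D4.
    assert (Hs1 : phi (S x) <= 1) by (apply Hphi; lia).
    assert (b * (1 - phi x) <= b * (e * (1 - phi (S x)) + delta))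
      by (apply Rmult_le_compat_l; lra).
    replace (b * (e * (1 - phi (S x)) + delta)) with ((1 - phi (S x)) + b * delta) in H
      by (rewrite Rmult_plus_distr_l, <- Rmult_assoc, (Rmult_comm b e), Heb; ring).
    destruct (Hpsi x) as [_ [_ [_ [_ T]]]].
    destruct (T Hpos) as [T1|[T1|T1]].
    - lra.
    - assert (e * phi x <= e * psi x) by (apply Rmult_le_compat_l; lra). lra.
    - assert (b * phi x <= b * psi x) by (apply Rmult_le_compat_l; lra). lra. }
  assert (Hfind : forall N, (N <= n)%nat ->
     (exists y, (y <= N)%nat /\ (forall x, (x < y)%nat -> psi x <= phi x) /\
                phi y <= psi y /\ 0 < psi y) \/
     (forall x, (x <= N)%nat -> psi x <= phi x)).
  { induction N as [|N IH]; intros HN.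
    - destruct (Rle_dec (phi 0%nat) (psi 0%nat)) as [H1|H1];
      [destruct (Rlt_dec 0 (psi 0%nat)) as [H2|H2]|].
      + left. exists 0%nat. repeat split; try lia; try lra.
      + right. intros x Hx. replace x with 0%nat by lia.
        pose proof (Hphi 0%nat ltac:(lia)). lra.
      + right. intros x Hx. replace x with 0%nat by lia. lra.
    - destruct (IH ltac:(lia)) as [[y [Hy1 Hy2]]|IH'].
      + left. exists y. split; [lia|exact Hy2].
      + destruct (Rle_dec (phi (S N)) (psi (S N))) as [H1|H1];
        [destruct (Rlt_dec 0 (psi (S N))) as [H2|H2]|].
        * left. exists (S N). split; [lia|]. split; [|lra].
          intros x Hx. apply IH'. lia.
        * right. intros x Hx. destruct (Nat.eq_dec x (S N)) as [->|Hne].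
          -- pose proof (Hphi (S N) HN). lra.
          -- apply IH'. lia.
        * right. intros x Hx. destruct (Nat.eq_dec x (S N)) as [->|Hne].
          -- lra.
          -- apply IH'. lia. }
  assert (Hy : exists y, (y <= n)%nat /\ forall x, (x <= n)%nat ->
     ((x < y)%nat -> psi x <= phi x) /\ ((y < x)%nat -> phi x <= psi x)).
  { destruct (Hfind n (le_n n)) as [[y [Hy1 [Hy2 [Hy3 Hy4]]]]|Hall].
    - exists y. split; [exact Hy1|].
      assert (Hfw : forall k, (y + k <= n)%nat -> phi (y + k)%nat <= psi (y + k)%nat /\ 0 < psi (y+k)%nat).
      { induction k as [|k IHk]; intros Hk.
        - rewrite Nat.add_0_r. lra.
        - destruct (IHk ltac:(lia)) as [K1 K2].
          replace (y + S k)%nat with (S (y + k)) by lia.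
          split.
          + apply Hstep; [lia|lra|lra].
          + destruct (Hpsi (y+k)%nat) as [_ [K3 _]]. lra. }
      intros x Hx. split; [apply Hy2|].
      intros Hyx. replace x with (y + (x - y))%nat by lia. apply Hfw. lia.
    - exists n. split; [lia|]. intros x Hx. split; [intros; apply Hall; lia| lia]. }
  destruct Hy as [y [Hyn Hy]].
  set (p0 := binom_pmf n theta0). set (p1 := binom_pmf n theta1).
  assert (Hp0y : 0 < p0 y) by (apply pmf_pos; lra).
  set (c := p1 y / p0 y).
  assert (Hc : 0 <= c) by (unfold c; left; apply Rdiv_lt_0_compat; [apply pmf_pos; lra| lra]).
  assert (Hterm : forall x, (x <= n)%nat ->
            (phi x - psi x) * p1 x <= c * ((phi x - psi x) * p0 x)).
  { intros x Hx. destruct (Hy x Hx) as [Y1 Y2].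
    assert (Hp0x : 0 < p0 x) by (apply pmf_pos; lra).
    destruct (lt_eq_lt_dec x y) as [[Hlt|Heq]|Hgt].
    - pose proof (LR n theta0 theta1 x y ltac:(lra) ltac:(lra) ltac:(lra) ltac:(lia) Hyn) as L.
      fold p0 p1 in L. specialize (Y1 Hlt).
      assert (p1 x <= c * p0 x).
      { unfold c. apply (Rmult_le_reg_r (p0 y)); [lra|].
        replace (p1 y / p0 y * p0 x * p0 y) with (p1 y * p0 x) by (field; lra). lra. }
      replace (c * ((phi x - psi x) * p0 x)) with ((phi x - psi x) * (c * p0 x)) by ring.
      apply Rmult_le_compat_l; lra.
    - subst x. unfold c. right. field. lra.
    - pose proof (LR n theta0 theta1 y x ltac:(lra) ltac:(lra) ltac:(lra) ltac:(lia) Hx) as L.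
      fold p0 p1 in L. specialize (Y2 Hgt).
      assert (c * p0 x <= p1 x).
      { unfold c. apply (Rmult_le_reg_r (p0 y)); [lra|].
        replace (p1 y / p0 y * p0 x * p0 y) with (p1 y * p0 x) by (field; lra). lra. }
      assert (0 <= (psi x - phi x) * (p1 x - c * p0 x)) by (apply Rmult_le_pos; lra).
      nra. }
  assert (Hdiff : forall th, power n th phi - power n th psi =
            sum_f_R0 (fun x => (phi x - psi x) * binom_pmf n th x) n).
  { intros th. unfold power. rewrite <- minus_sum. apply sum_eq. intros; ring. }
  assert (S1 : sum_f_R0 (fun x => (phi x - psi x) * p1 x) n <=
               sum_f_R0 (fun x => c * ((phi x - psi x) * p0 x)) n)
    by (apply sum_Rle; exact Hterm).
  rewrite sum_scal in S1.
  pose proof (Hdiff theta1) as E1. pose proof (Hdiff theta0) as E0.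
  fold p1 in E1. fold p0 in E0. rewrite <- E1, <- E0 in S1.
  assert (c * (power n theta0 phi - power n theta0 psi) <= 0).
  { assert (power n theta0 phi - power n theta0 psi <= 0) by lra. nra. }
  lra.
Qed.
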